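(* Let $X$ be a metric space with bounded geometry. For every $q,k\geq 1$, $\mathrm{TO}^{q+k}_{X\times\mathbb{R}^k}(r) \lesssim \mathrm{TO}^q_X(r)\,\mathrm{TO}^k_{\mathbb{R}^k}(r) \simeq \mathrm{TO}^q_X(r)$.
   Context: $\mathbb R^k$ has the Euclidean metric and $X\times\mathbb R^k$ the $\ell^\infty$ product metric. Bounded geometry: for every $R\ge r>0$ each ball of radius $R$ is covered by a uniformly bounded number of balls of radius $r$. For $Z\subseteq X$, $\mathrm{Cov}^1(Z)$ is the minimal number of closed radius-$1$ balls of $X$ covering $Z$. For continuous $f:Z\to\mathbb R^q$, $\mathrm{Ov}(f)=\sup_{z}\mathrm{Cov}^1(f^{-1}(z))$, $\mathrm{TO}^q(Z)=\min_f\mathrm{Ov}(f)$, $\mathrm{TO}^q_X(r)=\max\{\mathrm{TO}^q(Z): Z\subseteq X,\mathrm{Cov}^1(Z)\le r\}$. $f\lesssim g$ means there is $C$ with $f(r)\le Cg(Cr)+C$ for all $r$; $\simeq$ means both directions. *)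

(* Defs.v *)
From HB Require Import structures.
From mathcomp Require Import all_boot all_order all_algebra.
From mathcomp Require Import all_classical all_reals.
From mathcomp Require Import ereal.
Set Implicit Arguments. Unset Strict Implicit. Unset Printing Implicit Defensive.
Import Order.TTheory GRing.Theory Num.Theory.
Local Open Scope classical_set_scope.
Local Open Scope ring_scope.
Local Open Scope ereal_scope.

Section Defs.
Variable R : realType.

Definition is_metric (T : Type) (d : T -> T -> R) : Prop :=
  [/\ forall x y, d x y = 0 <-> x = y,
      forall x y, d x y = d y x &
      forall x y z, d x z <= d x y + d y z]%R.

Definition cball (T : Type) (d : T -> T -> R) (x : T) (e : R) : set T :=
  [set y | (d x y <= e)%R].

Definition bounded_geometry (T : Type) (d : T -> T -> R) : Prop :=
  forall R0 r : R, (0 < r)%R -> (r <= R0)%R ->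
    exists N : nat, forall x : T, exists n : nat, (n <= N)%N /\
      exists c : 'I_n -> T, cball d x R0 `<=` [set y | exists i, cball d (c i) r y].

Definition deucl (k : nat) (u v : 'rV[R]_k) : R :=
  Num.sqrt (\sum_(i < k) (u ord0 i - v ord0 i) ^+ 2)%R.

Definition prod_dist (T : Type) (d : T -> T -> R) (k : nat)
  (p p' : T * 'rV[R]_k) : R := Num.max (d p.1 p'.1) (deucl p.2 p'.2).

(* Cov^1(Z): minimal number of closed radius-1 balls covering Z (+oo if none) *)
Definition Cov1 (T : Type) (d : T -> T -> R) (Z : set T) : \bar R :=
  ereal_inf [set (n%:R)%:E | n in [set n : nat |
     exists c : 'I_n -> T, Z `<=` [set y | exists i, cball d (c i) 1%R y]]].

(* continuity of f on Z (i.e. of the restriction f|_Z w.r.t. the subspace metric) *)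
Definition cont_on (T : Type) (d : T -> T -> R) (q : nat) (Z : set T)
  (f : T -> 'rV[R]_q) : Prop :=
  forall x, Z x -> forall e : R, (0 < e)%R -> exists2 del : R, (0 < del)%R &
    forall y, Z y -> (d x y < del)%R -> (deucl (f x) (f y) < e)%R.

Definition Ov (T : Type) (d : T -> T -> R) (q : nat) (Z : set T)
  (f : T -> 'rV[R]_q) : \bar R :=
  ereal_sup (range (fun z : 'rV[R]_q => Cov1 d (Z `&` f @^-1` [set z]))).

Definition TO (T : Type) (d : T -> T -> R) (q : nat) (Z : set T) : \bar R :=
  ereal_inf [set Ov d Z f | f in [set f : T -> 'rV[R]_q | cont_on d Z f]].

Definition TOX (T : Type) (d : T -> T -> R) (q : nat) (r : R) : \bar R :=
  ereal_sup [set TO d q Z | Z in [set Z : set T | Cov1 d Z <= r%:E]].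

Definition lesssim (f g : R -> \bar R) : Prop :=
  exists C : R, (0 < C)%R /\
    forall r : R, (0 <= r)%R -> f r <= C%:E * g (C * r)%R + C%:E.

Definition simeq (f g : R -> \bar R) : Prop := lesssim f g /\ lesssim g f.

End Defs.

(* Main.v *)
Require Import Defs.
From HB Require Import structures.
From mathcomp Require Import all_boot all_order all_algebra.
From mathcomp Require Import all_classical all_reals.
From mathcomp Require Import ereal.
Import Order.TTheory GRing.Theory Num.Theory.
Local Open Scope ring_scope.
Local Open Scope ereal_scope.
Local Open Scope classical_set_scope.

Section Helpers.
Variable R : realType.

Lemma I0_elim (T : Type) (i : 'I_0) : T.
Proof. by case: i. Qed.

Lemma Cov1_le (T1 T2 : Type) (d1 : T1 -> T1 -> R) (d2 : T2 -> T2 -> R)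
  (A : set T1) (B : set T2) :
  (forall n (c : 'I_n -> T1), A `<=` [set y | exists i, cball d1 (c i) 1%R y] ->
     exists c' : 'I_n -> T2, B `<=` [set y | exists i, cball d2 (c' i) 1%R y]) ->
  Cov1 d2 B <= Cov1 d1 A.
Proof.
move=> H; apply: ereal_inf_le_tmp => _ [n [c Hc] <-].
by exists n => //; apply: (H n c).
Qed.

Lemma Cov1_sub (T : Type) (d : T -> T -> R) (A B : set T) :
  B `<=` A -> Cov1 d B <= Cov1 d A.
Proof.
move=> BA; apply: Cov1_le => n c Hc; exists c => x /BA; exact: Hc.
Qed.

Lemma Cov1_ge0 (T : Type) (d : T -> T -> R) (A : set T) : 0 <= Cov1 d A.
Proof. by apply: le_ereal_inf_tmp => _ [n _ <-]; rewrite lee_fin ler0n. Qed.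

Lemma Cov1_set0 (T : Type) (d : T -> T -> R) : Cov1 d set0 <= 0.
Proof.
apply: ereal_inf_lbound; exists 0%N => //.
by exists (fun i => I0_elim T i).
Qed.

Lemma Cov1_ge1 (T : Type) (d : T -> T -> R) (A : set T) (z : T) :
  A z -> 1 <= Cov1 d A.
Proof.
move=> Az; apply: le_ereal_inf_tmp => _ [n [c Hc] <-].
have [i _] := Hc z Az.
by rewrite lee_fin ler1n (leq_ltn_trans (leq0n i) (ltn_ord i)).
Qed.

Lemma deucl_refl (k : nat) (u : 'rV[R]_k) : deucl u u = 0%R.
Proof.
rewrite /deucl (eq_bigr (fun _ => 0%R)); last by move=> i _; rewrite subrr expr0n.
by rewrite big1 // sqrtr0.
Qed.

Lemma deucl_ge0 (k : nat) (u v : 'rV[R]_k) : (0 <= deucl u v)%R.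
Proof. exact: sqrtr_ge0. Qed.

Lemma sqrtD_le (a b : R) : (0 <= a)%R -> (0 <= b)%R ->
  (Num.sqrt (a + b) <= Num.sqrt a + Num.sqrt b)%R.
Proof.
move=> a0 b0.
have h : (0 <= (Num.sqrt a + Num.sqrt b) ^+ 2)%R by rewrite exprn_even_ge0.
rewrite -[X in (_ <= X)%R]ger0_norm ?addr_ge0 ?sqrtr_ge0 // -sqrtr_sqr ler_sqrt //.
rewrite sqrrD !sqr_sqrtr // -addrA lerD2l lerDr.
by rewrite mulrn_wge0 // mulr_ge0 // sqrtr_ge0.
Qed.

Lemma deucl_row (q k : nat) (a a' : 'rV[R]_q) (b b' : 'rV[R]_k) :
  (deucl (row_mx a b) (row_mx a' b') <= deucl a a' + deucl b b')%R.
Proof.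
rewrite /deucl big_split_ord /=.
under eq_bigr do rewrite !row_mxEl.
under [X in (_ + X)%R]eq_bigr do rewrite !row_mxEr.
apply: sqrtD_le; apply: sumr_ge0 => i _; exact: sqr_ge0.
Qed.

Lemma Ov_ge0 (T : Type) (d : T -> T -> R) (q : nat) (Z : set T)
  (f : T -> 'rV[R]_q) : 0 <= Ov d Z f.
Proof.
apply: le_ereal_sup_tmp; exists (Cov1 d (Z `&` f @^-1` [set 0%R])).
  by exists 0%R.
exact: Cov1_ge0.
Qed.

Lemma TO_ge0 (T : Type) (d : T -> T -> R) (q : nat) (Z : set T) :
  0 <= TO d q Z.
Proof. by apply: le_ereal_inf_tmp => _ [f _ <-]; exact: Ov_ge0. Qed.

Lemma TO_le_Ov (T : Type) (d : T -> T -> R) (q : nat) (Z : set T)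
  (f : T -> 'rV[R]_q) : cont_on d Z f -> TO d q Z <= Ov d Z f.
Proof. by move=> fc; apply: ereal_inf_lbound; exists f. Qed.
Arguments TO_le_Ov {T d q Z} f.

Lemma TO_le_Cov1 (T : Type) (d : T -> T -> R) (q : nat) (Z : set T) :
  TO d q Z <= Cov1 d Z.
Proof.
apply: le_trans (TO_le_Ov (fun _ => 0%R) _) _.
  move=> x Zx e e0; exists 1%R => // y Zy _; by rewrite deucl_refl.
apply: ge_ereal_sup => _ [z _ <-]; apply: Cov1_sub; by move=> x [].
Qed.

Lemma TOX_le_r (T : Type) (d : T -> T -> R) (q : nat) (r : R) :
  TOX d q r <= r%:E.
Proof.
apply: ge_ereal_sup => _ [Z HZ <-]; exact: le_trans (TO_le_Cov1 _ _ _ _) HZ.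
Qed.

Lemma TOX_ge0 (T : Type) (d : T -> T -> R) (q : nat) (r : R) :
  (0 <= r)%R -> 0 <= TOX d q r.
Proof.
move=> r0; apply: le_ereal_sup_tmp; exists (TO d q set0); last exact: TO_ge0.
exists set0 => //=; apply: le_trans (Cov1_set0 _ _) _; by rewrite lee_fin.
Qed.

Lemma TOX_eucl_le1 (k : nat) (r : R) : TOX (@deucl R k) k r <= 1.
Proof.
apply: ge_ereal_sup => _ [Z _ <-].
apply: le_trans (TO_le_Ov id _) _.
  by move=> x Zx e e0; exists e.
apply: ge_ereal_sup => _ [z _ <-].
apply: le_trans (ereal_inf_lbound _) _; last exact: lexx.
exists 1%N => //; exists (fun _ => z) => x [_ /= ->]; exists ord0.
by rewrite /cball /= deucl_refl.
Qed.

Lemma TOX_eucl_ge1 (k : nat) (r : R) : (1 <= r)%R -> 1 <= TOX (@deucl R k) k r.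
Proof.
move=> r1; apply: le_ereal_sup_tmp; exists (TO (@deucl R k) k [set 0%R]).
  exists [set 0%R] => //=.
  apply: (@le_trans _ _ ((1%:R)%:E)); last by rewrite lee_fin; exact: r1.
  apply: ereal_inf_lbound; exists 1%N => //; exists (fun _ => 0%R) => x /= ->; exists ord0.
  by rewrite /cball /= deucl_refl.
apply: le_ereal_inf_tmp => _ [f _ <-].
apply: le_ereal_sup_tmp; exists (Cov1 (@deucl R k) ([set 0%R] `&` f @^-1` [set f 0%R])).
  by exists (f 0%R).
exact: (@Cov1_ge1 _ _ _ 0%R).
Qed.

Lemma TOX_prod_le (T : Type) (d : T -> T -> R) (q k : nat) (r : R) :
  TOX (@prod_dist R T d k) (q + k) r <= TOX d q r.
Proof.
apply: ge_ereal_sup => _ [Z HZ <-].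
apply: le_trans (_ : _ <= TO d q (fst @` Z)) _.
  apply: le_ereal_inf_tmp => _ [g gc <-].
  pose f (p : T * 'rV[R]_k) : 'rV[R]_(q + k) := row_mx (g p.1) p.2.
  apply: le_trans (TO_le_Ov f _) _.
    move=> p Zp e e0.
    have e20 : (0 < e / 2)%R by rewrite divr_gt0.
    have [del1 del10 H1] := gc p.1 (ex_intro2 _ _ p Zp erefl) (e / 2)%R e20.
    exists (Num.min del1 (e / 2))%R; first by rewrite lt_min del10 e20.
    move=> p' Zp'; rewrite /prod_dist lt_min !gt_max; move=> /andP[/andP[h1 h2] /andP[h3 h4]].
    apply: le_lt_trans (deucl_row _ _ (g p.1) (g p'.1) p.2 p'.2) _.
    rewrite [e](splitr e); apply: ltrD => //.
    by apply: H1 => //; exists p'.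
  apply: ge_ereal_sup => _ [w _ <-].
  apply: le_ereal_sup_tmp; exists (Cov1 d (fst @` Z `&` g @^-1` [set lsubmx w])).
    by exists (lsubmx w).
  apply: Cov1_le => n c Hc; exists (fun i => (c i, rsubmx w)).
  move=> p [Zp /= fpw].
  have e1 : lsubmx w = g p.1 by rewrite -fpw /f row_mxKl.
  have e2 : rsubmx w = p.2 by rewrite -fpw /f row_mxKr.
  have [i Hi] := Hc p.1 (conj (ex_intro2 _ _ p Zp erefl) (esym e1)).
  exists i; rewrite /cball /prod_dist /= ge_max Hi /= e2 deucl_refl; exact: ler01.
apply: ereal_sup_ubound; exists (fst @` Z) => //=.
apply: le_trans _ HZ; apply: Cov1_le => n c Hc; exists (fun i => (c i).1).
move=> _ [p Zp <-]; have [i Hi] := Hc p Zp; exists i.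
  move: Hi; rewrite /cball /prod_dist /= ge_max; case/andP => //.
Qed.

End Helpers.

Theorem corollary1p10 (R : realType) (X : Type) (d : X -> X -> R) (q k : nat) :
  is_metric d -> bounded_geometry d -> (1 <= q)%N -> (1 <= k)%N ->
  lesssim (TOX (@prod_dist R X d k) (q + k))
          (fun r => TOX d q r * TOX (@deucl R k) k r) /\
  simeq (fun r => TOX d q r * TOX (@deucl R k) k r) (TOX d q).
Proof.
move=> _ _ _ _.
have Hprod0 r : (0 <= r)%R -> 0 <= TOX d q r * TOX (@deucl R k) k r.
  by move=> r0; apply: mule_ge0; apply: TOX_ge0.
have Hprod1 r : (1 <= r)%R -> TOX d q r * TOX (@deucl R k) k r = TOX d q r.
  move=> r1; have -> : TOX (@deucl R k) k r = 1.
    by apply/le_anti; rewrite TOX_eucl_le1 TOX_eucl_ge1.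
  by rewrite mule1.
have small (x y : \bar R) r : (r < 1)%R -> x <= r%:E -> 0 <= y -> x <= y + 1.
  move=> r1 xr y0; apply: le_trans xr _.
  apply: le_trans (_ : 1%:E <= y + 1); last by rewrite -[X in X <= _]add0e leeD2r.
  by rewrite lee_fin ltW.
split; last split.
- exists 1%R; split => // r r0; rewrite mul1r mul1e.
  case: (lerP 1 r) => r1.
    rewrite Hprod1 //; apply: le_trans (TOX_prod_le _ _ _ _ _ _) _.
    by apply: leeDl.
  by apply: small r1 (TOX_le_r _ _ _ _ _) (Hprod0 _ r0).
- exists 1%R; split => // r r0; rewrite mul1r mul1e.
  apply: (@le_trans _ _ (TOX d q r)); last exact: leeDl.
  rewrite -[X in _ <= X]mule1; apply: lee_pmul => //; try exact: TOX_ge0.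
  exact: TOX_eucl_le1.
- exists 1%R; split => // r r0; rewrite mul1r mul1e.
  case: (lerP 1 r) => r1.
    by rewrite Hprod1 //; apply: leeDl.
  by apply: small r1 (TOX_le_r _ _ _ _ _) (Hprod0 _ r0).
Qed.
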